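(* Let $a<b$, let $g:[a,b]\to[0,\infty)$ be increasing and left-continuous, and let $f\in BV([a,b])\cap\mathcal L^1_g([a,b))$. Assume $g^C$ is $p$-$H$-Hölder on $[a,b]$, i.e. $|g^C(x)-g^C(y)|\le H|x-y|^p$ for all $x,y\in[a,b]$, with $H>0$, $p\in(0,1]$. Then $$\Big| f(a)(g^C(b)-g^C(a))+\sum_{s\in[a,b)} f(s)\Delta^+g(s)-\int_{[a,b)} f\,\mathrm d\mu_g\Big|\le H(b-a)^p\,\mathrm{Var}_a^b f$$ and $$\Big| \tfrac{f(a)+f(b)}{2}(g^C(b)-g^C(a))+\sum_{s\in[a,b)} f(s)\Delta^+g(s)-\int_{[a,b)} f\,\mathrm d\mu_g\Big|\le H\Big(\tfrac{b-a}{2}\Big)^p\mathrm{Var}_a^b f.$$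
   Context: For an increasing left-continuous $g:[a,b]\to\mathbb R$, $\mu_g$ is the Lebesgue–Stieltjes measure on $[a,b)$ with $\mu_g([c,d))=g(d)-g(c)$, and $\mathcal L^1_g([a,b))$ the space of $\mu_g$-integrable functions. $\Delta^+\varphi(t)=\varphi(t^+)-\varphi(t)$. The jump part of $g$ is $g^B(t)=\sum_{s\in[a,t)}\Delta^+g(s)$ and its continuous part is $g^C=g-g^B$. $\mathrm{Var}_a^b f$ is the total variation of $f$ on $[a,b]$. *)

(* Defs.v *)
From HB Require Import structures.
From mathcomp Require Import all_boot all_order all_algebra.
From mathcomp Require Import all_classical all_reals all_analysis.
Set Implicit Arguments. Unset Strict Implicit. Unset Printing Implicit Defensive.
Import Order.TTheory GRing.Theory Num.Theory.
Import numFieldNormedType.Exports.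
Local Open Scope classical_set_scope.
Local Open Scope ring_scope.

Definition rjump (R : realType) (g : R -> R) (t : R) : R :=
  lim (g x @[x --> t^'+]) - g t.

Definition jumpPart (R : realType) (g : R -> R) (a t : R) : R :=
  fine (\esum_(s in `[a, t[) (rjump g s)%:E)%E.

Definition contPart (R : realType) (g : R -> R) (a t : R) : R :=
  g t - jumpPart g a t.

(* sum of an absolutely summable real family over D: positive minus negative part *)
Definition ssum (R : realType) (D : set R) (F : R -> R) : \bar R :=
  (\esum_(s in D) ((EFin \o F)^\+ s) - \esum_(s in D) ((EFin \o F)^\- s))%E.

(* Main.v *)
Require Import Defs.
From HB Require Import structures.
From mathcomp Require Import all_boot all_order all_algebra.
From mathcomp Require Import all_classical all_reals all_analysis.
From mathcomp Require Import measurable_realfun.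
From mathcomp Require Import ring lra.
Import Order.TTheory GRing.Theory Num.Theory.
Import numFieldNormedType.Exports.
Local Open Scope classical_set_scope.
Local Open Scope ring_scope.
Notation EB R := (measurable_realfun.constructive_ereal_extended__canonical__measurable_structure_SigmaRing R).
Lemma rjump_cvg (R : realType) (a b : R) (g : R -> R) s :
  {in `[a, b] &, {homo g : x y / x <= y}} -> a <= s -> s < b ->
  g x @[x --> s^'+] --> lim (g x @[x --> s^'+]).
Proof.
move=> gh aS sb.
have H : (BRight s < BLeft b)%O by rewrite bnd_simp.
apply: cvgP.
apply: (@nondecreasing_at_right_cvgr R g s (BLeft b) H).
- move=> x y; rewrite !in_itv/= => /andP[sx xb] /andP[sy yb] xy.
  apply: gh => //; rewrite in_itv/=; apply/andP; split;
    by rewrite ?(le_trans aS) ?ltW// ?(lt_trans sx) ?(lt_trans sy).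
- exists (g s) => _ [x /= + <-]; rewrite in_itv/= => /andP[sx xb].
  apply: gh; rewrite ?in_itv/= ?aS ?(ltW sx) ?(ltW sb) ?(ltW xb) ?(le_trans aS (ltW sx))//.
Qed.
Lemma mu_set1 (R : realType) (a b : R) (g : R -> R) (mu : {measure set R -> \bar R}) s :
  {in `[a, b] &, {homo g : x y / x <= y}} ->
  (forall c d, a <= c -> c <= d -> d <= b -> mu `[c, d[%classic = (g d - g c)%:E) ->
  a <= s -> s < b -> mu [set s] = (rjump g s)%:E.
Proof.
move=> gh hmu aS sb.
pose u n : R := s + (b - s) / n.+1%:R.
have bs0 : 0 < b - s by rewrite subr_gt0.
have su n : s < u n by rewrite /u ltrDl divr_gt0.
have ub n : u n <= b.
  rewrite /u -lerBrDl ler_pdivrMr//.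
  by rewrite ler_peMr ?(ltW bs0)// ler1n.
have ucvg : u n @[n --> \oo] --> s.
  rewrite -[X in _ --> X]addr0; apply: cvgD; first exact: cvg_cst.
  rewrite -(mulr0 (b - s)); apply: cvgM; first exact: cvg_cst.
  exact: cvg_harmonic.
have udec : forall i j, (i <= j)%N -> u j <= u i.
  move=> n m nm; rewrite /u lerD2l ler_pM2l//.
  by rewrite lef_pV2 ?posrE ?ltr0n// ler_nat ltnS.
have Fcap : \bigcap_n `[s, u n[%classic = [set s].
  apply/seteqP; split => [x /= Hx|x /= ->{x} n _]; last first.
    by rewrite /= in_itv/= lexx su.
  have /andP[sx _] : s <= x < u 0 by move: (Hx 0%N I); rewrite /= in_itv.
  apply/eqP; rewrite eq_le sx andbT; apply/negP => /negP; rewrite -ltNge => xs.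
  have [N _ HN] := cvgr_lt s ucvg x xs.
  have := Hx N I; rewrite /= in_itv/= => /andP[_].
  by rewrite ltNge (ltW (HN N (leqnn N))).
have mF (n : nat) : mu `[s, u n[%classic = (g (u n) - g s)%:E 
  by apply: hmu; [exact: aS|exact: ltW|exact: ub].
have c1 : (mu \o (fun n => `[s, u n[%classic)) x @[x --> \oo] --> mu [set s].
  rewrite -Fcap; apply: nonincreasing_cvg_mu.
  - by rewrite mF ltry.
  - by move=> n; exact: measurable_itv.
  - by rewrite Fcap; exact: measurable_set1.
  - move=> n m nm; rewrite subsetEset => x /=; rewrite !in_itv/= => /andP[-> xu] /=.
    exact: (lt_le_trans xu (udec _ _ nm)).
have gcv := @rjump_cvg R a b g s gh aS sb.
have c2 : (mu \o (fun n => `[s, u n[%classic)) x @[x --> \oo] --> (rjump g s)%:E.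
  apply: cvg_EFin; first by apply: nearW => n /=; rewrite mF.
  rewrite /rjump.
  have -> : fine \o (mu \o (fun n => `[s, u n[%classic)) = fun n => g (u n) - g s.
    by apply/funext => n /=; rewrite mF.
  apply: cvgB; last exact: cvg_cst.
  by move/cvg_at_rightP : gcv; apply; split.
exact: (cvg_unique _ c1 c2).
Qed.
Lemma key_le (R : realType) (mu : {measure set R -> \bar R}) (D : set R)
  (phi w : R -> R) : measurable D ->
  (forall s, D s -> 0 <= phi s) ->
  measurable_fun D (EFin \o phi : R -> EB R) ->
  (forall s, D s -> ((w s)%:E <= mu [set s])%E) ->
  (\esum_(s in D) (phi s * w s)%:E <= \int[mu]_(x in D) (phi x)%:E)%E.
Proof.
move=> mD phi0 mphi hw.
apply: ge_ereal_sup => _ [X [finX XD] <-].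
have mX : measurable X.
  by apply: countable_measurable; [exact: measurable_set1|exact: finite_set_countable].
have hXD : (\int[mu]_(x in X) (phi x)%:E <= \int[mu]_(x in D) (phi x)%:E)%E.
  apply: ge0_subset_integral => //; try by move=> x Dx; rewrite lee_fin phi0.
apply: le_trans hXD.
have XE : X = \big[setU/set0]_(i <- finmap.enum_fset (fset_set X)) [set i].
  rewrite bigsetU_fset_set//; apply/seteqP; split => [x Xx|x [y Xy ->]//].
  by exists x.
rewrite [in leRHS]XE ge0_integral_bigsetU//; first last.
- by rewrite -XE => x Xx; rewrite lee_fin phi0//; exact: XD.
- by rewrite -XE; apply: measurable_funS mphi.
- by move=> i j _ _ [x [/= -> ->]].
rewrite -fsbig_finite//; apply: lee_fsum => //.
move=> x Xx.
rewrite (@eq_integral _ _ _ mu _ (fun=> (phi x)%:E)); last first.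
  by move=> y /[!inE] ->.
rewrite (integral_cst mu (measurable_set1 x)).
rewrite EFinM; apply: lee_wpmul2l; first by rewrite lee_fin phi0//; exact: XD.
by apply: hw; exact: XD.
Qed.
Lemma esumZ (R : realType) (D : set R) (k : R) (w : R -> \bar R) : 0 <= k ->
  (forall s, D s -> (0 <= w s)%E) ->
  (\esum_(s in D) (k%:E * w s) = k%:E * \esum_(s in D) w s)%E.
Proof.
move=> k0 w0.
have H X : finite_set X -> X `<=` D ->
    (k%:E * \sum_(i \in X) w i = \sum_(i \in X) (k%:E * w i))%E.
  move=> finX XD; rewrite !fsbig_finite// big_seq_cond ge0_sume_distrr.
    by rewrite -big_seq_cond.
  move=> i /andP[+ _]; rewrite in_fset_set// inE => Xi; exact: w0 (XD _ Xi).
rewrite /esum -ereal_supZl//; last first.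
  by apply/set0P; exists 0%E; exists set0; [exact: fsets_set0|rewrite fsbig_set0].
congr ereal_sup; apply/seteqP; split => [x [X [finX XD] <-]|x [y [X [finX XD] <-] <-]].
  by exists (\sum_(i \in X) w i)%E; [exists X|rewrite H].
by exists X => //; rewrite H.
Qed.

Lemma integrable_cst' (R : realType) (mu : {measure set R -> \bar R}) (D : set R) (k : R) :
  measurable D -> (mu D < +oo)%E -> mu.-integrable D (EFin \o cst k).
Proof.
move=> mD muD; apply/integrableP; split; first by apply/measurable_EFinP; exact: measurable_cst.
rewrite (@eq_integral _ _ _ mu _ (cst `|k|%:E)); last by move=> x _ /=.
by rewrite integral_cst// lte_mul_pinfty.
Qed.
Lemma general (R : realType) (a b c W : R) (g f : R -> R) (mu : {measure set R -> \bar R}) :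
  a < b ->
  {in `[a, b] &, {homo g : x y / x <= y}} ->
  (forall c d, a <= c -> c <= d -> d <= b -> mu `[c, d[%classic = (g d - g c)%:E) ->
  mu.-integrable `[a, b[%classic (EFin \o f) ->
  (forall x, a <= x -> x < b -> `|f x - c| <= W) ->
  (`| (c * (contPart g a b - contPart g a a))%:E
        + ssum `[a, b[ (fun s => (f s * rjump g s)%R)
        - \int[mu]_(x in `[a, b[) (f x)%:E |
     <= (W * (contPart g a b - contPart g a a))%:E)%E.
Proof.
move=> ab gh hmu fi fW.
set D := `[a, b[%classic.
have mD : measurable D by exact: measurable_itv.
have Ds s : D s -> a <= s /\ s < b by rewrite /D/= in_itv/= => /andP.
have hs s : D s -> mu [set s] = (rjump g s)%:E.
  by move=> /Ds[aS sb]; exact: (@mu_set1 R a b g mu s gh hmu aS sb).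
have d0 s : D s -> 0 <= rjump g s.
  by move=> Dx; rewrite -lee_fin -hs// measure_ge0.
have muD : mu D = (g b - g a)%:E by apply: hmu; rewrite ?lexx ?ltW.
have muDoo : (mu D < +oo)%E by rewrite muD ltry.
have mf : measurable_fun D (EFin \o f) := measurable_int mu fi.
have W0 : 0 <= W by apply: le_trans (fW a (lexx a) ab).
have fb x : D x -> c - W <= f x <= c + W.
  move=> /Ds[ax xb]; have := fW x ax xb; rewrite ler_norml => /andP[h1 h2].
  by apply/andP; split; lra.
pose S (phi : R -> R) := (\esum_(s in D) (phi s * rjump g s)%:E)%E.
have KEY phi : (forall s, D s -> 0 <= phi s) -> measurable_fun D (EFin \o phi) ->
    (S phi <= \int[mu]_(x in D) (phi x)%:E)%E.
  move=> p0 mp; apply: key_le => // s Ds'; by rewrite hs.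
have S0 phi : (forall s, D s -> 0 <= phi s) -> (0 <= S phi)%E.
  by move=> p0; apply: esum_ge0 => s Ds'; rewrite lee_fin mulr_ge0// ?p0 ?d0.
have icst k : mu.-integrable D (EFin \o cst k) by exact: integrable_cst'.
have intfk k : mu.-integrable D (EFin \o (fun x => f x + k)).
  have -> : EFin \o (fun x => f x + k) = ((EFin \o f) \+ (EFin \o cst k))%E by [].
  exact: integrableD.
have intkf k : mu.-integrable D (EFin \o (fun x => k - f x)).
  have -> : EFin \o (fun x => k - f x) = ((EFin \o cst k) \- (EFin \o f))%E by [].
  exact: integrableB.
have Ifin := integrable_fin_num mD fi.
set I := fine (\int[mu]_(x in D) (f x)%:E).
have IE : (\int[mu]_(x in D) (f x)%:E = I%:E)%E by rewrite fineK.
have Ifk k : (\int[mu]_(x in D) (f x + k)%:E = (I + k * (g b - g a))%:E)%E.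
  rewrite (_ : (fun x => (f x + k)%:E) = ((EFin \o f) \+ (EFin \o cst k))%E)//.
  rewrite integralD// IE (_ : EFin \o cst k = cst k%:E)//.
  by rewrite (integral_cst mu mD) muD -EFinM -EFinD.
have Ikf k : (\int[mu]_(x in D) (k - f x)%:E = (k * (g b - g a) - I)%:E)%E.
  rewrite (_ : (fun x => (k - f x)%:E) = ((EFin \o cst k) \- (EFin \o f))%E)//.
  rewrite integralB// IE (_ : EFin \o cst k = cst k%:E)//.
  by rewrite (integral_cst mu mD) muD -EFinM -EFinB.
have mfk k : measurable_fun D (EFin \o (fun x => f x + k)) := measurable_int mu (intfk k).
have mkf k : measurable_fun D (EFin \o (fun x => k - f x)) := measurable_int mu (intkf k).
have Sfk k : (forall s, D s -> 0 <= f s + k) ->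
    (S (fun x => (f x + k)%R) <= (I + k * (g b - g a))%:E)%E.
  by move=> h; rewrite -Ifk; apply: KEY.
have Skf k : (forall s, D s -> 0 <= k - f s) ->
    (S (fun x => (k - f x)%R) <= (k * (g b - g a) - I)%:E)%E.
  by move=> h; rewrite -Ikf; apply: KEY.
set Jb := (\esum_(s in D) (rjump g s)%:E)%E.
have SZ k : 0 <= k -> S (cst k) = (k%:E * Jb)%E.
  move=> k0; rewrite /S /Jb; under eq_esum do rewrite EFinM.
  by rewrite esumZ// => s Ds'; rewrite lee_fin d0.
have Jb0 : (0 <= Jb)%E by apply: esum_ge0 => s Ds'; rewrite lee_fin d0.
have Jbfin : Jb \is a fin_num.
  rewrite ge0_fin_numE//; apply: (@le_lt_trans _ _ (mu D)); last by rewrite muD ltry.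
  rewrite -[Jb]mul1e -SZ//.
  apply: le_trans (KEY (cst 1) _ _) _ => //.
    by apply/measurable_EFinP; exact: measurable_cst.
  rewrite (_ : (fun x => (cst 1 x)%:E) = cst 1%:E)//.
  by rewrite (integral_cst mu mD) mul1e.
set J := fine Jb.
have JbE : Jb = J%:E by rewrite fineK.
have cb : contPart g a b = g b - J by [].
have ca : contPart g a a = g a.
  by rewrite /contPart /jumpPart set_itvco0 esum_set0 /= subr0.
set B := `|c| + W.
have fB s : D s -> 0 <= f s + B.
  move=> Dx; have /andP[h1 _] := fb s Dx; rewrite /B.
  have := ler_norm (- c); rewrite normrN; lra.
have Sfin phi : (forall s, D s -> 0 <= phi s) -> (S phi < +oo)%E ->
    S phi = (fine (S phi))%:E.
  by move=> h hoo; rewrite fineK// ge0_fin_numE// S0.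
have SfB : (S (fun x => (f x + B)%R) < +oo)%E.
  by apply: le_lt_trans (Sfk _ fB) _; rewrite ltry.
have SSE : ssum D (fun s => (f s * rjump g s)%R) = (S (fun x => (f x + B)%R) - S (cst B))%E.
  rewrite /ssum.
  have -> : EFin \o (fun s => (f s * rjump g s)%R) =
     ((fun s => ((f s + B) * rjump g s)%:E) \- (fun s => (B * rjump g s)%:E))%E.
    by apply/funext => s /=; rewrite -EFinB mulrDl addrK.
  rewrite esumB//.
  - rewrite /summable (eq_esum (b := fun s => ((f s + B) * rjump g s)%:E)) //.
    by move=> s Ds'; rewrite gee0_abs// lee_fin mulr_ge0// ?fB ?d0.
  - rewrite /summable (eq_esum (b := fun s => (B * rjump g s)%:E)) //.
      by rewrite -/(S (cst B)) SZ ?JbE ?addr_ge0// -EFinM ltry.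
    by move=> s Ds'; rewrite gee0_abs// lee_fin mulr_ge0// ?d0 ?addr_ge0.
  - by move=> s Ds'; rewrite lee_fin mulr_ge0// ?fB ?d0.
  - by move=> s Ds'; rewrite lee_fin mulr_ge0// ?d0 ?addr_ge0.
have f1 s : D s -> 0 <= f s + (W - c).
  by move=> Dx; have /andP[h1 _] := fb s Dx; lra.
have f2 s : D s -> 0 <= (c + W) - f s.
  by move=> Dx; have /andP[_ h2] := fb s Dx; lra.
have cW0 : 0 <= B + c - W.
  rewrite /B; have := ler_norm (- c); rewrite normrN; lra.
have E2 : S (fun x => (f x + B)%R) =
    (S (fun x => (f x + (W - c))%R) + S (cst (B + c - W)%R))%E.
  rewrite /S -esumD; last 2 first.
  - by move=> s' Ds'; rewrite lee_fin mulr_ge0// ?f1 ?d0.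
  - by move=> s' Ds'; rewrite lee_fin mulr_ge0// ?d0.
  by apply: eq_esum => s' _; rewrite -EFinD /cst -mulrDl; congr (_ * _)%:E; ring.
have E3 : (S (fun x => ((c + W) - f x)%R) + S (fun x => (f x + B)%R))%E =
    S (cst (c + W + B)%R).
  rewrite /S -esumD; last 2 first.
  - by move=> s' Ds'; rewrite lee_fin mulr_ge0// ?f2 ?d0.
  - by move=> s' Ds'; rewrite lee_fin mulr_ge0// ?fB ?d0.
  by apply: eq_esum => s' _; rewrite -EFinD /cst -mulrDl; congr (_ * _)%:E; ring.
have K1 := Sfk _ f1.
have K2 := Skf _ f2.
have F1 : (S (fun x => (f x + (W - c))%R) < +oo)%E.
  by apply: le_lt_trans K1 _; rewrite ltry.
have F2 : (S (fun x => ((c + W) - f x)%R) < +oo)%E.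
  by apply: le_lt_trans K2 _; rewrite ltry.
rewrite (Sfin _ f1 F1) in K1 E2.
rewrite (Sfin _ f2 F2) in K2 E3.
rewrite (Sfin _ fB SfB) in E2 E3 SSE.
have B0 : 0 <= B by rewrite /B addr_ge0.
have cWB0 : 0 <= c + W + B by have := ler_norm (- c); rewrite normrN /B; lra.
rewrite !SZ // ?JbE in E2 E3 SSE.
rewrite SSE cb ca IE.
set x1 := fine (S (fun s => (f s + (W - c))%R)).
set x2 := fine (S (fun s => (c + W - f s)%R)).
set s1 := fine (S (fun s => (f s + B)%R)).
rewrite lee_fin in K1; rewrite lee_fin in K2.
rewrite -EFinM -EFinD in E2; have E2' := EFin_inj E2.
rewrite -EFinM -EFinD in E3; have E3' := EFin_inj E3.
rewrite (_ : (_ + _ - _)%E = (c * (g b - J - g a) + (s1 - B * J) - I)%:E)//.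
rewrite abse_EFin lee_fin ler_norml.
move: K1 K2 E2' E3'.
rewrite !(mulrDl, mulrDr, mulrBl, mulrBr) => K1 K2 E2' E3'.
rewrite /s1 !(mulrN, mulNr) in K1 K2 E2' E3' *.
apply/andP; split; lra.
Qed.
Theorem mainTheorem2 (R : realType) (a b H p : R) (g f : R -> R)
  (mu : {measure set R -> \bar R}) :
  a < b ->
  {in `[a, b] &, {homo g : x y / x <= y}} ->
  (forall t, t \in `[a, b] -> 0 <= g t) ->
  (forall t, t \in `]a, b] -> g x @[x --> t^'-] --> g t) ->
  (forall c d, a <= c -> c <= d -> d <= b -> mu `[c, d[%classic = (g d - g c)%:E) ->
  bounded_variation a b f ->
  mu.-integrable `[a, b[%classic (EFin \o f) ->
  0 < H -> 0 < p -> p <= 1 ->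
  (forall x y, x \in `[a, b] -> y \in `[a, b] ->
     `|contPart g a x - contPart g a y| <= H * `|x - y| `^ p) ->
  (`| (f a * (contPart g a b - contPart g a a))%:E
        + ssum `[a, b[ (fun s => (f s * rjump g s)%R)
        - \int[mu]_(x in `[a, b[) (f x)%:E |
     <= (H * (b - a) `^ p)%:E * total_variation a b f)%E /\
  (`| ((f a + f b) / 2 * (contPart g a b - contPart g a a))%:E
        + ssum `[a, b[ (fun s => (f s * rjump g s)%R)
        - \int[mu]_(x in `[a, b[) (f x)%:E |
     <= (H * ((b - a) / 2) `^ p)%:E * total_variation a b f)%E.
Proof.
move=> ab gh g0 glc hmu bv fi H0 p0 p1 hold.
have TVfin : total_variation a b f \is a fin_num by apply/bounded_variationP => //; exact: ltW.
set V := fine (total_variation a b f).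
have TVE : total_variation a b f = V%:E by rewrite fineK.
have V0 : 0 <= V by rewrite -lee_fin -TVE total_variation_ge0// ltW.
have tvs x : a <= x -> x <= b ->
    (`|f x - f a| + `|f b - f x| <= V).
  move=> ax xb; rewrite -lee_fin -TVE (total_variationD f ax xb) EFinD.
  by apply: leeD; apply: total_variation_ge.
set M := contPart g a b - contPart g a a.
have MH : M <= H * (b - a) `^ p.
  have := hold b a; rewrite !in_itv/= lexx (ltW ab) => /(_ isT).
  rewrite lexx => /(_ isT).
  rewrite (@gtr0_norm _ (b - a)) ?subr_gt0// => h; exact: le_trans (ler_norm _) h.
have P0 : 0 <= (b - a) `^ p by exact: powR_ge0.
split.
- apply: le_trans (@general R a b (f a) V g f mu ab gh hmu fi _) _.
    move=> x ax xb; have := tvs x ax (ltW xb).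
    have := normr_ge0 (f b - f x); lra.
  rewrite TVE -EFinM lee_fin mulrC; apply: ler_wpM2r => //.
- apply: le_trans (@general R a b ((f a + f b) / 2) (V / 2) g f mu ab gh hmu fi _) _.
    move=> x ax xb; have := tvs x ax (ltW xb).
    have := ler_norm (f x - f a); have := ler_norm (f b - f x).
    have := ler_norm (- (f x - f a)); have := ler_norm (- (f b - f x)).
    rewrite !normrN ler_norml => h1 h2 h3 h4 h5; apply/andP; split; lra.
  rewrite TVE -EFinM lee_fin.
  have hq : 2^-1 <= (2^-1 : R) `^ p.
    by apply: ger1_powR => //; rewrite invr_gt0 ltr0n /= invf_le1 ?ler1n.
  have ba0 : 0 <= b - a by rewrite subr_ge0 ltW.
  have i20 : 0 <= (2^-1 : R) by rewrite invr_ge0.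
  rewrite powRM //.
  have h1 : V / 2 * M <= V / 2 * (H * (b - a) `^ p) by apply: ler_wpM2l => //; lra.
  apply: le_trans h1 _.
  have h2 : H * (b - a) `^ p * 2^-1 <= H * (b - a) `^ p * (2^-1 : R) `^ p.
    by apply: ler_wpM2l => //; apply: mulr_ge0 => //; exact: ltW.
  rewrite (_ : V / 2 * (H * (b - a) `^ p) = H * (b - a) `^ p * 2^-1 * V); last by ring.
  rewrite mulrA; exact: ler_wpM2r.
Qed.
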